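(* Let $k\ge 6$ be an integer, and let $(a_n)$ be a sequence satisfying $a_n=a_{n-1}+a_{n-k}$ for all sufficiently large $n$. Let $r_1,\ldots,r_k$ be the complex roots of the characteristic polynomial $x^k-x^{k-1}-1$, ordered so that $|r_1|\ge|r_2|\ge\cdots\ge|r_k|$. Then $|r_2|>1$ and $r_2$ is not real. *)

(* Defs.v *)
From mathcomp Require Import all_boot all_order all_algebra all_field.
Set Implicit Arguments. Unset Strict Implicit. Unset Printing Implicit Defensive.
Import Order.TTheory GRing.Theory Num.Theory.
Local Open Scope ring_scope.

Definition charpoly_k (k : nat) : {poly algC} := 'X^k - 'X^(k.-1) - 1.

(* Main.v *)
Require Import Defs.
From mathcomp Require Import all_boot all_order all_algebra all_field.
From mathcomp Require Import ring lra.
Import Order.TTheory GRing.Theory Num.Theory.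
Local Open Scope ring_scope.

Section RealLemmas.
Variable R : realFieldType.

Lemma bern (x : R) (n : nat) : 0 <= x <= 1 -> (1 - x) ^+ n * (1 + n%:R * x) <= 1.
Proof.
move=> /andP[x0 x1]; elim: n => [|n IH]; first by rewrite expr0 mul0r addr0 mulr1.
have h0 : 0 <= (1 - x) ^+ n by apply: exprn_ge0; lra.
rewrite exprSr -mulrA; apply: le_trans IH; apply: ler_wpM2l => //.
have n0 : 0 <= n%:R :> R by []. rewrite -addn1 natrD; nra.
Qed.

Lemma ind_bound (n : nat) : (2 <= n)%N -> 2 * (n%:R + 4) ^+ n < (n%:R + 2 : R) ^+ n.+1 ->
  2 * (n.+1%:R + 4) ^+ n.+1 < (n.+1%:R + 2 : R) ^+ n.+2.
Proof.
move=> n2 IH.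
set N : R := n%:R.
have N2 : 2 <= N by rewrite /N (ler_nat R 2 n).
have hN1 : n.+1%:R = N + 1 :> R by rewrite -addn1 natrD.
rewrite hN1; rewrite -/N in IH.
set x : R := 2 / ((N + 3) * (N + 4)).
have hx : x * ((N + 3) * (N + 4)) = 2 by rewrite /x mulfVK //; apply: lt0r_neq0; nra.
have x0 : 0 <= x by rewrite /x; apply: divr_ge0 => //; nra.
have x1 : x <= 1 by nra.
have B := @bern x n (introT andP (conj x0 x1)).
rewrite -/N in B.
set Cn := (1 - x) ^+ n in B.
have Cn0 : 0 <= Cn by apply: exprn_ge0; lra.
have E : ((N + 1 + 4) * (N + 2)) ^+ n = Cn * ((N + 3) * (N + 4)) ^+ n.
  rewrite /Cn -exprMn; congr (_ ^+ _); rewrite mulrBl mul1r hx; ring.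
rewrite !exprMn in E.
set V := (N + 1 + 4) ^+ n in E *.
set Q := (N + 2) ^+ n in E IH *.
set S := (N + 3) ^+ n in E *.
set P := (N + 4) ^+ n in E IH *.
have Q0 : 0 < Q by apply: exprn_gt0; lra.
have S0 : 0 < S by apply: exprn_gt0; lra.
have P0 : 0 < P by apply: exprn_gt0; lra.
have V0 : 0 <= V by apply: exprn_ge0; lra.
rewrite exprS in IH.
rewrite exprS (_ : N + 1 + 2 = N + 3); last by ring.
rewrite -/V (_ : (N + 3) ^+ n.+2 = (N + 3) * ((N + 3) * S)); last by rewrite /S !exprS.
have key : (N + 5) * (N + 2) * Cn <= (N + 3) ^+ 2.
  have h1 : (N + 5) * (N + 2) <= (N + 3) ^+ 2 * (1 + N * x).
    have : (N + 3) ^+ 2 * (1 + N * x) * (N + 4) = (N + 3) ^+ 2 * (N + 4) + 2 * N * (N + 3).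
      rewrite -hx; ring.
    move=> hh; have N4 : 0 < N + 4 by lra.
    rewrite -(ler_pM2r N4) hh; nra.
  have h2 : Cn * (1 + N * x) <= 1 by rewrite mulrC; rewrite mulrC in B; exact: B.
  have h3 : 0 < 1 + N * x by nra.
  nra.
suff : 2 * ((N + 1 + 4) * V) * Q < (N + 3) * ((N + 3) * S) * Q by rewrite ltr_pM2r.
have -> : 2 * ((N + 1 + 4) * V) * Q = 2 * (N + 5) * (Cn * S * P) by rewrite mulrA -mulrA E; ring.
have Cn0' : 0 < Cn by apply: exprn_gt0; nra.
have h4 : 2 * (N + 5) * (Cn * S * P) < (N + 5) * Cn * S * ((N + 2) * Q).
  have -> : 2 * (N + 5) * (Cn * S * P) = (N + 5) * Cn * S * (2 * P) by ring.
  rewrite ltr_pM2l //; apply: mulr_gt0 => //; apply: mulr_gt0 => //; lra.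
apply: lt_le_trans h4 _.
have -> : (N + 5) * Cn * S * ((N + 2) * Q) = ((N + 5) * (N + 2) * Cn) * (S * Q) by ring.
have -> : (N + 3) * ((N + 3) * S) * Q = (N + 3) ^+ 2 * (S * Q) by ring.
apply: ler_wpM2r => //; apply: mulr_ge0; lra.
Qed.


Lemma pow_bound (n : nat) : (6 <= n)%N -> 2 * (n%:R + 4) ^+ n < (n%:R + 2 : R) ^+ n.+1.
Proof.
elim: n => [//|n IH]; rewrite leq_eqVlt => /orP[/eqP <-|h6].
  lra.
apply: ind_bound; first exact: (@leq_trans 6 2 n). by apply: IH.
Qed.

Lemma bound_k (n : nat) (B : R) : (6 <= n)%N -> n%:R + 2 <= B -> (1 + 2 / B) ^+ n < B / 2.
Proof.
move=> n6 hB.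
have N0 : 0 <= n%:R :> R by [].
have B0 : 0 < B by lra.
have h1 : 1 + 2 / B <= (n%:R + 4) / (n%:R + 2).
  rewrite ler_pdivlMr; last lra.
  rewrite mulrDl mul1r -mulrA. 
  have : 2 / B * (n%:R + 2) <= 2.
    rewrite mulrAC ler_pdivrMr //; lra.
  lra.
apply: le_lt_trans (_ : ((n%:R + 4) / (n%:R + 2)) ^+ n < B / 2).
  have d0 : 0 <= 2 / B by apply: divr_ge0; lra.
  apply: lerXn2r; rewrite ?nnegrE //; [lra | apply: divr_ge0; lra].
rewrite expr_div_n ltr_pdivrMr; last by apply: exprn_gt0; lra.
have := @pow_bound n n6; rewrite exprS => h.
have hp : 0 < (n%:R + 2 : R) ^+ n by apply: exprn_gt0; lra.
have : (n%:R + 2) * (n%:R + 2) ^+ n <= B * (n%:R + 2 : R) ^+ n by rewrite ler_pM2r.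
lra.
Qed.

Lemma bound_6 (B : R) : 7 <= B -> B / 2 <= (1 + 2 / B) ^+ 5 -> B < 7 + 1/50.
Proof.
move=> B7 h; rewrite ltNge; apply/negP => hB.
have B0 : 0 < B by lra.
have h1 : 1 + 2 / B <= 451/351.
  have : 2 / B <= 100/351.
    rewrite ler_pdivrMr //; lra.
  lra.
have h2 : (1 + 2 / B) ^+ 5 <= (451/351) ^+ 5.
  have : 0 <= 2 / B by apply: divr_ge0; lra.
  move=> d0; apply: lerXn2r; rewrite ?nnegrE //; lra.
lra.
Qed.

Lemma key0 (n : nat) (t x B : R) : 0 <= t -> x <= t ->
  (t ^+ 2) ^+ n * (t ^+ 2 - 2 * x + 1) = 1 ->
  (t ^+ 2) ^+ n * (t ^+ 2 - 1) = B + 1 -> 2 < B ->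
  B / 2 <= (1 + 2 / B) ^+ n /\ 0 < x.
Proof.
move=> t0 xt hd hB B2.
rewrite -exprM mulnC exprM in hd hB.
set T := t ^+ n in hd hB.
have T0 : 0 <= T by apply: exprn_ge0.
have t1 : 1 < t by nra.
have hT1 : T * (t - 1) <= 1 by nra.
have hBT : B + 1 <= T * (t + 1).
  have h0 : 0 <= T * (t + 1) by apply: mulr_ge0; lra.
  have := ler_wpM2r h0 hT1; rewrite mul1r => h.
  apply: le_trans h; rewrite -hB le_eqVlt; apply/orP; left; apply/eqP; ring.
have Bn0 : B != 0 by apply: lt0r_neq0; lra.
have e2 : 1 + 2 / B = (B + 2) / B by field.
have tB : t <= 1 + 2 / B.
  rewrite e2 ler_pdivlMr; last lra. nra.
have TB : B / 2 <= T.
  have h0 : 0 <= T by [].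
  have : (B + 1) * B <= T * (t + 1) * B by rewrite ler_pM2r //; lra.
  have : T * (t + 1) * B <= T * (2 * B + 2).
    rewrite -mulrA ler_wpM2l //. nra.
  move=> h1 h2; rewrite ler_pdivrMr; last lra. nra.
split.
  apply: le_trans TB _.
  have d0 : 0 <= 2 / B by apply: divr_ge0; lra.
  apply: lerXn2r; rewrite ?nnegrE //; lra.
have T1 : 1 < T by lra.
have T2 : 1 < T ^+ 2 by nra.
nra.
Qed.

Lemma other6 (x rho a : R) : x ^+ 2 <= rho -> rho <= 1 ->
  rho ^+ 5 * (rho - 2 * x + 1) = 1 -> rho ^+ 5 * (1 - rho) <= a -> a < 1/50 -> 0 < x.
Proof.
move=> hx r1 hr ha a50.
have r0 : 0 <= rho by nra.
set P := rho ^+ 5 in hr ha.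
have P0 : 0 <= P by apply: exprn_ge0.
have xm1 : -1 <= x by nra.
have P4 : 1/4 <= P by nra.
have r23 : 23/25 <= rho by nra.
have : (23/25) ^+ 5 <= P by apply: lerXn2r; rewrite ?nnegrE //; lra.
nra.
Qed.


Lemma negcase (T s : R) : 1 <= T -> 1 < s -> T * (1 + s) = 1 -> False.
Proof. move=> h1 h2 h3; nra. Qed.

Lemma eqroot (n : nat) (t x0 y0 x : R) : 1 < x -> x <= t -> t ^+ 2 = x0 ^+ 2 + y0 ^+ 2 ->
  (t ^+ 2) ^+ n * (t ^+ 2 - 2 * x0 + 1) = 1 -> x ^+ n * (x - 1) = 1 -> x0 = x /\ y0 = 0.
Proof.
move=> x1 xt ht hd hx.
rewrite -exprM mulnC exprM in hd.
set T := t ^+ n in hd; set X := x ^+ n in hx.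
have X0 : 0 < X by apply: exprn_gt0; lra.
have TX : X <= T by apply: lerXn2r; rewrite ?nnegrE; lra.
have y2 : 0 <= y0 ^+ 2 by apply: sqr_ge0.
have x0t : x0 <= t by nra.
have D0 : (t - 1) ^+ 2 <= t ^+ 2 - 2 * x0 + 1 by nra.
have D1 : (x - 1) ^+ 2 <= (t - 1) ^+ 2 by nra.
have hx2 : X ^+ 2 * (x - 1) ^+ 2 = 1 by rewrite -exprMn hx expr1n.
have e1 : X ^+ 2 * (t ^+ 2 - 2 * x0 + 1) <= T ^+ 2 * (t ^+ 2 - 2 * x0 + 1).
  apply: ler_wpM2r; first nra. by apply: lerXn2r; rewrite ?nnegrE; lra.
have e2 : X ^+ 2 * (x - 1) ^+ 2 <= X ^+ 2 * (t ^+ 2 - 2 * x0 + 1).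
  apply: ler_wpM2l; first nra. lra.
have X2 : 0 < X ^+ 2 by apply: exprn_gt0.
have e3 : (t ^+ 2 - 2 * x0 + 1) <= (x - 1) ^+ 2.
  rewrite -(ler_pM2l X2); nra.
have tx : t = x by nra.
have x0x : x0 = x by rewrite tx in e3 D0; nra.
split => //; rewrite x0x tx in ht.
have : y0 ^+ 2 = 0 by lra.
by move/eqP; rewrite sqrf_eq0 => /eqP.
Qed.

Lemma derivcontra (n : nat) (x : R) : 1 < x -> x ^+ n.+1 * n.+2%:R - x ^+ n * n.+1%:R = 0 -> False.
Proof.
move=> x1 h.
have X0 : x ^+ n != 0 by apply: lt0r_neq0; apply: exprn_gt0; lra.
set N : R := n%:R.
have N0 : 0 <= N by [].
have h2 : x ^+ n.+1 * n.+2%:R = x ^+ n * x * (N + 2).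
  by rewrite exprSr -(addn2 n) natrD.
have h3 : x ^+ n * n.+1%:R = x ^+ n * (N + 1).
  by rewrite -(addn1 n) natrD.
rewrite h2 h3 -mulrA -mulrBr in h.
move: h => /eqP; rewrite mulf_eq0 (negbTE X0) /= => /eqP e.
have h4 : 0 < (x - 1) * (N + 2) by apply: mulr_gt0; lra.
have h5 : (x - 1) * (N + 2) = x * (N + 2) - (N + 2) by ring.
lra.
Qed.

End RealLemmas.

Lemma logder (s : seq algC) (x : algC) : x \notin s ->
  (\prod_(z <- s) ('X - z%:P))^`().[x] =
  (\prod_(z <- s) ('X - z%:P)).[x] * \sum_(z <- s) (x - z)^-1.
Proof.
elim: s => [|a s IH]; first by rewrite !big_nil mulr0 -polyC1 derivC horner0.
rewrite in_cons negb_or => /andP[xa xs].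
rewrite !big_cons derivM derivXsubC mul1r hornerD !hornerM hornerXsubC IH //.
have : x - a != 0 by rewrite subr_eq0.
by move=> h; field.
Qed.

Lemma cp_horner k z : (charpoly_k k).[z] = z ^+ k - z ^+ k.-1 - 1.
Proof. by rewrite /charpoly_k !hornerE. Qed.

Lemma cp_deriv k : (charpoly_k k)^`() = 'X^(k.-1) *+ k - 'X^(k.-1.-1) *+ k.-1.
Proof. by rewrite /charpoly_k !derivB derivC subr0 !derivXn. Qed.

Lemma cp_size k : (1 <= k)%N -> size (charpoly_k k) = k.+1.
Proof.
move=> k1; rewrite /charpoly_k -addrA -opprD size_polyDl size_polyXn //.
rewrite size_polyN; apply: (leq_ltn_trans (size_polyD _ _)).
rewrite size_polyXn size_poly1 gtn_max; case: k k1 => // k _ /=.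
by rewrite ltnS leqnn.
Qed.

Lemma sum_ge0_seq (s : seq algC) (F : algC -> algC) :
  (forall y, y \in s -> 0 <= F y) -> 0 <= \sum_(y <- s) F y.
Proof.
elim: s => [|a s' IH] h; first by rewrite big_nil.
rewrite big_cons addr_ge0 ?h ?mem_head //; apply: IH => y hy; apply: h.
by rewrite in_cons hy orbT.
Qed.

Lemma sum1_seq (s : seq algC) : \sum_(z <- s) (1 : algC) = (size s)%:R.
Proof. by elim: s => [|a s IH]; rewrite ?big_nil // big_cons IH /= mulrS. Qed.

Lemma le_sum_mem (s : seq algC) (F : algC -> algC) z :
  (forall y, y \in s -> 0 <= F y) -> z \in s -> F z <= \sum_(y <- s) F y.
Proof.
have ge0 : forall s', (forall y, y \in s' -> 0 <= F y) -> 0 <= \sum_(y <- s') F y.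
  elim=> [|a s' IH] h; first by rewrite big_nil.
  rewrite big_cons addr_ge0 ?h ?mem_head //; apply: IH => y hy; apply: h.
  by rewrite in_cons hy orbT.
elim: s => [//|a s IH] h; rewrite in_cons big_cons => /orP[/eqP->|hz].
  by rewrite lerDl ge0 // => y hy; apply: h; rewrite in_cons hy orbT.
rewrite -[X in X <= _]add0r lerD ?h ?mem_head //.
by apply: IH => // y hy; apply: h; rewrite in_cons hy orbT.
Qed.

Lemma root_facts n (z : algC) : z ^+ n * (z - 1) = 1 ->
  [/\ `|z| ^+ 2 = 'Re z ^+ 2 + 'Im z ^+ 2,
      (`|z| ^+ 2) ^+ n * (`|z| ^+ 2 - 2 * 'Re z + 1) = 1,
      'Re ((z - 1)^-1) = ('Re z - 1) * (`|z| ^+ 2) ^+ n &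
      (`|z| ^+ 2) ^+ n * (`|z| ^+ 2 - 1) = 2 * 'Re ((z - 1)^-1) + 1].
Proof.
move=> h.
have h1 := normC2_Re_Im z.
have Re1 : 'Re (1 : algC) = 1 by apply/Creal_ReP; exact: real1.
have Im1 : 'Im (1 : algC) = 0 by apply/Creal_ImP; exact: real1.
have hD : `|z - 1| ^+ 2 = `|z| ^+ 2 - 2 * 'Re z + 1.
  by rewrite normC2_Re_Im !raddfB /= Re1 Im1 h1; ring.
have hN : `|z| ^+ n * `|z - 1| = 1 by rewrite -normrX -normrM h normr1.
have h2 : (`|z| ^+ 2) ^+ n * `|z - 1| ^+ 2 = 1.
  by rewrite -exprM mulnC exprM -exprMn hN expr1n.
set P := (`|z| ^+ 2) ^+ n in h2 *.
have P0 : P != 0 by apply/eqP => P0; move: h2; rewrite P0 mul0r => /eqP; rewrite eq_sym oner_eq0.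
have e : `|z - 1| ^+ 2 = P^-1 by apply: (mulfI P0); rewrite h2 mulfV.
have h3 : 'Re ((z - 1)^-1) = ('Re z - 1) * P by rewrite ReV e invrK raddfB /= Re1.
split => //; first by rewrite -hD.
have h2' : P * (`|z| ^+ 2 - 2 * 'Re z + 1) = 1 by rewrite -hD.
rewrite h3; transitivity (2 * (('Re z - 1) * P) + P * (`|z| ^+ 2 - 2 * 'Re z + 1)).
  by ring.
by rewrite h2'.
Qed.


Lemma algR_eqE {a b : algR} : (algRval a = algRval b) -> a = b.
Proof. by apply: val_inj. Qed.
Lemma algR_leE {a b : algR} : algRval a <= algRval b -> a <= b.
Proof. by []. Qed.
Lemma algR_ltE {a b : algR} : algRval a < algRval b -> a < b.
Proof. by []. Qed.
Lemma algR_leV {a b : algR} : a <= b -> algRval a <= algRval b.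
Proof. by []. Qed.
Lemma algR_ltV {a b : algR} : a < b -> algRval a < algRval b.
Proof. by []. Qed.
Lemma algR_eqV {a b : algR} : a = b -> algRval a = algRval b.
Proof. by move=> ->. Qed.

Ltac pushR := rewrite ?(rmorphM, rmorphXn, rmorphB, rmorphD, rmorph1, rmorph_nat,
  rmorphN, fmorphV, rmorph0, rmorphMn) /=.

Lemma key0C (n : nat) (t x B : algC) : t \is Num.real -> x \is Num.real -> B \is Num.real ->
  0 <= t -> x <= t ->
  (t ^+ 2) ^+ n * (t ^+ 2 - 2 * x + 1) = 1 ->
  (t ^+ 2) ^+ n * (t ^+ 2 - 1) = B + 1 -> 2 < B ->
  B / 2 <= (1 + 2 / B) ^+ n /\ 0 < x.
Proof.
move=> tR xR BR h1 h2 h3 h4 h5.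
have e3 : ((in_algR tR) ^+ 2) ^+ n * ((in_algR tR) ^+ 2 - 2 * in_algR xR + 1) = 1.
  by apply: algR_eqE; pushR; exact: h3.
have e4 : ((in_algR tR) ^+ 2) ^+ n * ((in_algR tR) ^+ 2 - 1) = in_algR BR + 1.
  by apply: algR_eqE; pushR; exact: h4.
have h1' : 0 <= in_algR tR by apply: algR_leE; pushR.
have h2' : in_algR xR <= in_algR tR by apply: algR_leE; pushR.
have h5' : 2 < in_algR BR by apply: algR_ltE; pushR.
have [c1 c2] := @key0 algR n (in_algR tR) (in_algR xR) (in_algR BR) h1' h2' e3 e4 h5'.
split; [move: (algR_leV c1) | move: (algR_ltV c2)]; by pushR.
Qed.

Lemma bound_kC (n : nat) (B : algC) : B \is Num.real -> (6 <= n)%N -> n%:R + 2 <= B ->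
  (1 + 2 / B) ^+ n < B / 2.
Proof.
move=> BR n6 h.
have h' : n%:R + 2 <= in_algR BR by apply: algR_leE; pushR.
by move: (algR_ltV (@bound_k algR n (in_algR BR) n6 h')); pushR.
Qed.

Lemma bound_6C (B : algC) : B \is Num.real -> 7 <= B -> B / 2 <= (1 + 2 / B) ^+ 5 -> B < 7 + 1/50.
Proof.
move=> BR h1 h2.
have h1' : 7 <= in_algR BR by apply: algR_leE; pushR.
have h2' : in_algR BR / 2 <= (1 + 2 / in_algR BR) ^+ 5 by apply: algR_leE; pushR.
by move: (algR_ltV (@bound_6 algR (in_algR BR) h1' h2')); pushR.
Qed.

Lemma other6C (x y t a : algC) : x \is Num.real -> y \is Num.real -> t \is Num.real ->
  a \is Num.real -> 0 <= t -> t <= 1 -> t ^+ 2 = x ^+ 2 + y ^+ 2 ->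
  (t ^+ 2) ^+ 5 * (t ^+ 2 - 2 * x + 1) = 1 -> (t ^+ 2) ^+ 5 * (1 - t ^+ 2) <= a -> a < 1/50 -> 0 < x.
Proof.
move=> xR yR tR aR t0 t1 ht hr ha a50.
have hxr : (in_algR xR) ^+ 2 <= (in_algR tR) ^+ 2.
  have e : (in_algR tR) ^+ 2 = (in_algR xR) ^+ 2 + (in_algR yR) ^+ 2.
    by apply: algR_eqE; pushR; exact: ht.
  rewrite e lerDl; exact: sqr_ge0.
have hr1 : (in_algR tR) ^+ 2 <= 1.
  apply: exprn_ile1; [by apply: algR_leE; pushR | by apply: algR_leE; pushR].
have e2 : ((in_algR tR) ^+ 2) ^+ 5 * ((in_algR tR) ^+ 2 - 2 * in_algR xR + 1) = 1.
  by apply: algR_eqE; pushR; exact: hr.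
have ha' : ((in_algR tR) ^+ 2) ^+ 5 * (1 - (in_algR tR) ^+ 2) <= in_algR aR.
  by apply: algR_leE; pushR.
have a50' : in_algR aR < 1/50 by apply: algR_ltE; pushR.
by move: (algR_ltV (@other6 algR _ _ _ hxr hr1 e2 ha' a50')); pushR.
Qed.

Lemma negcaseC (T s : algC) : T \is Num.real -> s \is Num.real ->
  1 <= T -> 1 < s -> T * (1 + s) = 1 -> False.
Proof.
move=> TR sR h1 h2 h3.
have h1' : 1 <= in_algR TR by apply: algR_leE; pushR.
have h2' : 1 < in_algR sR by apply: algR_ltE; pushR.
apply: (@negcase algR (in_algR TR) (in_algR sR) h1' h2').
by apply: algR_eqE; pushR; exact: h3.
Qed.

Lemma eqrootC (n : nat) (t x0 y0 x : algC) : t \is Num.real -> x0 \is Num.real ->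
  y0 \is Num.real -> x \is Num.real ->
  1 < x -> x <= t -> t ^+ 2 = x0 ^+ 2 + y0 ^+ 2 ->
  (t ^+ 2) ^+ n * (t ^+ 2 - 2 * x0 + 1) = 1 -> x ^+ n * (x - 1) = 1 -> x0 = x /\ y0 = 0.
Proof.
move=> tR x0R y0R xR h1 h2 h3 h4 h5.
have h1' : 1 < in_algR xR by apply: algR_ltE; pushR.
have h2' : in_algR xR <= in_algR tR by apply: algR_leE; pushR.
have e3 : (in_algR tR) ^+ 2 = (in_algR x0R) ^+ 2 + (in_algR y0R) ^+ 2.
  by apply: algR_eqE; pushR; exact: h3.
have e4 : ((in_algR tR) ^+ 2) ^+ n * ((in_algR tR) ^+ 2 - 2 * in_algR x0R + 1) = 1.
  by apply: algR_eqE; pushR; exact: h4.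
have e5 : (in_algR xR) ^+ n * (in_algR xR - 1) = 1.
  by apply: algR_eqE; pushR; exact: h5.
have [c1 c2] := @eqroot algR n _ _ _ _ h1' h2' e3 e4 e5.
by split; [move: (algR_eqV c1) | move: (algR_eqV c2)]; pushR.
Qed.

Lemma derivcontraC (n : nat) (x : algC) : x \is Num.real -> 1 < x ->
  x ^+ n.+1 * n.+2%:R - x ^+ n * n.+1%:R = 0 -> False.
Proof.
move=> xR h1 h2.
have h1' : 1 < in_algR xR by apply: algR_ltE; pushR.
apply: (@derivcontra algR n (in_algR xR) h1').
by apply: algR_eqE; pushR; exact: h2.
Qed.

Theorem mainTheorem6 (k : nat) (hk : (6 <= k)%N) (a : nat -> algC)
  (ha : exists N : nat, forall n : nat, (N <= n)%N -> a n = a n.-1 + a (n - k)%N)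
  (rs : seq algC)
  (hroots : charpoly_k k = \prod_(z <- rs) ('X - z%:P))
  (hsorted : sorted (fun x y : algC => `|y| <= `|x|) rs) :
  1 < `|rs`_1| /\ rs`_1 \notin Num.real.
Proof.
clear ha a.
case: k hk hroots => [//|[//|n]] hk hroots.
have Hsz : size rs = n.+2.
  have := congr1 (fun p : {poly algC} => size p) hroots; rewrite /=; rewrite size_prod_XsubC cp_size //.
  by case.
have Hroot : forall z, z \in rs -> z ^+ n.+1 * (z - 1) = 1.
  move=> z hz; have : root (charpoly_k n.+2) z by rewrite hroots root_prod_XsubC.
  rewrite /root cp_horner /= => /eqP h.
  rewrite mulrBr mulr1 -exprSr; apply/eqP; rewrite -subr_eq0; apply/eqP; exact: h.
have Hz1 : forall z, z \in rs -> z - 1 != 0.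
  move=> z /Hroot h; apply/eqP => e; move: h; rewrite e mulr0 => /eqP.
  by rewrite eq_sym oner_eq0.
have Hz0 : forall z, z \in rs -> z != 0.
  move=> z /Hroot h; apply/eqP => e; move: h; rewrite e expr0n /= mul0r => /eqP.
  by rewrite eq_sym oner_eq0.
have D : (charpoly_k n.+2)^`() = 'X^(n.+1) *+ n.+2 - 'X^n *+ n.+1 := cp_deriv n.+2.
have H : forall z, (charpoly_k n.+2).[z] = z ^+ n.+2 - z ^+ n.+1 - 1 := fun z => cp_horner n.+2 z.
have Re1 : 'Re (1 : algC) = 1 by apply/Creal_ReP; exact: real1.
have S1 : \sum_(z <- rs) 'Re ((z - 1)^-1) = 1.
  have n1 : (1 : algC) \notin rs by apply/negP => /Hz1; rewrite subrr eqxx.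
  have := @logder rs 1 n1; rewrite -hroots D H hornerD hornerN !hornerMn !hornerXn !expr1n.
  rewrite mulrS addrK subrr sub0r mulN1r => h.
  rewrite -raddf_sum /=.
  have -> : \sum_(z <- rs) (z - 1)^-1 = - \sum_(z <- rs) (1 - z)^-1.
    by rewrite -sumrN; apply: eq_bigr => z _; rewrite -invrN opprB.
  by rewrite -h Re1.
have S0 : \sum_(z <- rs) 'Re (z^-1) = 0.
  have n0 : (0 : algC) \notin rs by apply/negP => /Hz0; rewrite eqxx.
  have := @logder rs 0 n0; rewrite -hroots D H hornerD hornerN !hornerMn !hornerXn.
  have n0' : (n == 0%N) = false by move: hk; case: (n).
  rewrite !expr0n /= n0' !mul0rn subrr !sub0r mulN1r => /eqP.
  rewrite eq_sym oppr_eq0 => /eqP h.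
  rewrite -raddf_sum /=.
  have -> : \sum_(z <- rs) z^-1 = - \sum_(z <- rs) (0 - z)^-1.
    by rewrite -sumrN; apply: eq_bigr => z _; rewrite sub0r invrN opprK.
  by rewrite h oppr0 raddf0.
have HF := fun z (hz : z \in rs) => @root_facts n.+1 z (Hroot z hz).
set G := fun z : algC => (`|z| ^+ 2) ^+ n.+1 * (`|z| ^+ 2 - 1).
have SG : \sum_(z <- rs) G z = n.+2%:R + 2.
  rewrite (eq_big_seq (fun z => 2 * 'Re ((z - 1)^-1) + 1)); last first.
    by move=> z hz; case: (HF z hz).
  by rewrite big_split /= -mulr_sumr S1 sum1_seq Hsz mulr1 addrC.
have GR : forall z, G z \is Num.real.
  move=> z; rewrite /G; apply: rpredM; first by apply: rpredX; apply: rpredX; exact: normr_real.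
  by apply: rpredB; [apply: rpredX; exact: normr_real | exact: real1].
have rtr : transitive (fun x y : algC => `|y| <= `|x|).
  by move=> b a c hab hbc; apply: le_trans hbc hab.
case E : rs => [|z0 [|z1 rest]]; first by rewrite E in Hsz.
  by rewrite E in Hsz.
subst rs.
move: hsorted => /= /andP[h01 hpath].
have hall := order_path_min rtr hpath.
have Hoth : forall z, z \in z1 :: rest -> `|z| <= `|z1|.
  move=> z; rewrite in_cons => /orP[/eqP -> //|hz].
  by move/allP: hall => /(_ z hz).
have mem0 : z0 \in [:: z0, z1 & rest] by rewrite mem_head.
have memo : forall z, z \in z1 :: rest -> z \in [:: z0, z1 & rest].
  by move=> z hz; rewrite in_cons hz orbT.
have n4 : (4 <= n)%N by [].
have HA : 1 < `|z1|.
  rewrite real_ltNge ?real1 ?normr_real //; apply/negP => Hle.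
  have Hle' : forall z, z \in z1 :: rest -> `|z| <= 1.
    by move=> z hz; apply: le_trans (Hoth z hz) Hle.
  have Gle : forall z, z \in z1 :: rest -> 0 <= - G z.
    move=> z hz; rewrite oppr_ge0 /G; apply: mulr_ge0_le0.
      by apply: exprn_ge0; apply: exprn_ge0.
    by rewrite subr_le0; apply: exprn_ile1 => //; apply: Hle'.
  set A := \sum_(z <- z1 :: rest) - G z.
  have A0 : 0 <= A := @sum_ge0_seq _ _ Gle.
  have AR : A \is Num.real by apply: rpred_sum => z _; rewrite rpredN GR.
  have G0 : G z0 = n.+2%:R + 2 + A.
    move: SG; rewrite big_cons /A sumrN => <-; ring.
  set B := n.+3%:R + A.
  have BR : B \is Num.real by rewrite rpredD ?rpred_nat.
  have B7 : 7 <= B.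
    apply: le_trans (_ : (n.+3%:R : algC) <= B); first by rewrite ler_nat.
    by rewrite /B lerDl.
  have B2 : 2 < B by apply: lt_le_trans B7; rewrite ltr_nat.
  case: (HF z0 mem0) => F1 F2 F3 F4.
  have G0' : (`|z0| ^+ 2) ^+ n.+1 * (`|z0| ^+ 2 - 1) = B + 1.
    by rewrite -/(G z0) G0 /B; ring.
  have [c1 c2] := @key0C n.+1 _ _ _ (normr_real z0) (Creal_Re z0) BR (normr_ge0 z0)
    (leif_Re_Creal z0).1 F2 G0' B2.
  case: (ltnP 4 n) => hn.
    have hle : n.+1%:R + 2 <= B.
      rewrite /B (_ : n.+1%:R + 2 = n.+3%:R :> algC); last by ring.
      by rewrite lerDl.
    have := @bound_kC n.+1 B BR hn hle.
    by move=> h; have := lt_le_trans h c1; rewrite ltxx.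
  have n4' : n = 4%N by apply/eqP; rewrite eqn_leq hn n4.
  subst n.
  have hB := @bound_6C B BR B7 c1.
  have A50 : A < 1/50 by move: hB; rewrite /B ltrD2l.
  have Hpos : forall z, z \in z1 :: rest -> 0 < 'Re (z^-1).
    move=> z hz.
    case: (HF z (memo z hz)) => f1 f2 f3 f4.
    have hGA : (`|z| ^+ 2) ^+ 5 * (1 - `|z| ^+ 2) <= A.
      have := @le_sum_mem _ _ _ Gle hz; rewrite /G -mulrN opprB //.
    have hx := @other6C _ _ _ _ (Creal_Re z) (Creal_Im z) (normr_real z) AR (normr_ge0 z)
      (Hle' z hz) f1 f2 hGA A50.
    rewrite ReV; apply: divr_gt0 => //.
    by apply: exprn_gt0; rewrite normr_gt0; apply: Hz0; apply: memo.
  have P0 : 0 < 'Re (z0^-1).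
    rewrite ReV; apply: divr_gt0 => //.
    by apply: exprn_gt0; rewrite normr_gt0; apply: Hz0.
  have P1 : 0 <= \sum_(z <- z1 :: rest) 'Re (z^-1).
    by apply: sum_ge0_seq => z hz; apply: ltW; apply: Hpos.
  by move: S0; rewrite big_cons => S0; have := ltr_wpDr P1 P0; rewrite S0 ltxx.
split => //=.
apply/negP => z1R.
have Hr1 := Hroot z1 (memo z1 (mem_head _ _)).
have hN : `|z1| ^+ n.+1 * `|z1 - 1| = 1 by rewrite -normrX -normrM Hr1 normr1.
case: (boolP (0 <= z1)) => hz.
  have ez : `|z1| = z1 by rewrite ger0_norm.
  rewrite ez in HA h01.
  case: (HF z0 mem0) => F1 F2 F3 F4.
  have [e1 e2] := @eqrootC n.+1 _ _ _ _ (normr_real z0) (Creal_Re z0) (Creal_Im z0) z1R HA h01 F1 F2 Hr1.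
  have ez0 : z0 = z1 by rewrite (algCrect z0) e1 e2 mulr0 addr0.
  subst z0.
  have h : (charpoly_k n.+2)^`().[z1] = (\prod_(z <- [:: z1, z1 & rest]) ('X - z%:P))^`().[z1].
    by rewrite hroots.
  rewrite D !big_cons derivM derivXsubC mul1r in h.
  have L : ('X^(n.+1) *+ n.+2 - 'X^n *+ n.+1).[z1] = z1 ^+ n.+1 * n.+2%:R - z1 ^+ n * n.+1%:R.
    by rewrite hornerD hornerN !hornerMn !hornerXn !mulr_natr.
  have R0 : forall Q : {poly algC}, (('X - z1%:P) * Q).[z1] = 0.
    by move=> Q; rewrite hornerM hornerXsubC subrr mul0r.
  rewrite L hornerD !R0 addr0 in h.
  exact: (@derivcontraC n _ z1R HA h).
have hz' : z1 < 0 by rewrite real_ltNge ?real0.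
have e1 : `|z1 - 1| = 1 + `|z1|.
  rewrite !ltr0_norm //; last by rewrite subr_lt0; apply: lt_trans hz' _; rewrite ltr01.
  by rewrite opprB addrC.
rewrite e1 in hN.
apply: (@negcaseC _ _ _ _ _ HA hN).
- by rewrite rpredX ?normr_real.
- by rewrite normr_real.
- by apply: exprn_ege1; apply: ltW.
Qed.
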